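(* Let $H$ be a separable complex Hilbert space, $(\Omega,\mu)$ a measure space with positive measure, let $K\in B(H)$ have closed range, let $F:\Omega\to H$ be a Parseval continuous $K$-frame of $H$, and let $\tilde F(\omega)=K^{\dagger}F(\omega)$ be its canonical dual continuous $K$-Bessel sequence. Let $f\in H$. Then for any $c\in L^2(\Omega,\mu)$ satisfying $Kf=\int_\Omega c(\omega)F(\omega)\,d\mu(\omega)$, we have $$\int_\Omega|c(\omega)|^2\,d\mu(\omega)=\int_\Omega|c(\omega)-\langle f,\tilde F(\omega)\rangle|^2\,d\mu(\omega)+\int_\Omega|\langle f,\tilde F(\omega)\rangle|^2\,d\mu(\omega).$$
   Context: A map $F:\Omega\to H$ is weakly measurable if $\omega\mapsto\langle f,F(\omega)\rangle$ is measurable for every $f\in H$. A Parseval continuous $K$-frame is a weakly measurable $F$ with $\int_\Omega|\langle f,F(\omega)\rangle|^2\,d\mu(\omega)=\|K^{\ast}f\|^2$ for all $f\in H$. Integrals $\int_\Omega c(\omega)F(\omega)\,d\mu(\omega)$ are understood weakly. $K^{\dagger}$ is the Moore–Penrose pseudo-inverse of the closed-range operator $K$; the canonical dual continuous $K$-Bessel sequence of $F$ is $K^{\dagger}F$, which satisfies $Kg=\int_\Omega\langle g,K^\dagger F(\omega)\rangle F(\omega)\,d\mu(\omega)$ for all $g\in H$. *)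

(* Defs.v *)
From HB Require Import structures.
From mathcomp Require Import all_boot all_order all_algebra.
From mathcomp Require Import all_classical all_reals all_analysis.
From mathcomp Require Import complex.
Set Implicit Arguments. Unset Strict Implicit. Unset Printing Implicit Defensive.
Import Order.TTheory GRing.Theory Num.Theory.
Local Open Scope ring_scope.
Local Open Scope classical_set_scope.

Section HilbertDefs.
Variable R : realType.
Local Notation C := R[i].
Variable H : lmodType C.
Variable ip : H -> H -> C. (* inner product, linear in the first argument *)

Definition hnorm (x : H) : R := Num.sqrt (complex.Re (ip x x)).

Definition cauchy_seq (u : nat -> H) : Prop :=
  forall e : R, 0 < e -> exists N : nat, forall m n : nat,
    (N <= m)%N -> (N <= n)%N -> hnorm (u m - u n) < e.

Definition converges_to (u : nat -> H) (l : H) : Prop :=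
  forall e : R, 0 < e -> exists N : nat, forall n : nat,
    (N <= n)%N -> hnorm (u n - l) < e.

Record hilbert_space : Prop := HilbertSpace {
  ip_linear : forall (a : C) (x y z : H), ip (a *: x + y) z = a * ip x z + ip y z;
  ip_conj_sym : forall x y : H, ip y x = conjc (ip x y);
  ip_nonneg : forall x : H, 0 <= complex.Re (ip x x);
  ip_definite : forall x : H, ip x x = 0 -> x = 0;
  ip_complete : forall u : nat -> H, cauchy_seq u -> exists l, converges_to u l
}.

Definition separable : Prop :=
  exists s : nat -> H, forall (x : H) (e : R), 0 < e ->
    exists n : nat, hnorm (x - s n) < e.

Definition bounded_op (T : H -> H) : Prop :=
  (forall (a : C) (x y : H), T (a *: x + y) = a *: T x + T y) /\
  exists M : R, forall x : H, hnorm (T x) <= M * hnorm x.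

Definition closed_range (T : H -> H) : Prop :=
  forall (u : nat -> H) (y : H), converges_to (fun n => T (u n)) y ->
    exists x : H, y = T x.

Definition adjoint_of (T Ts : H -> H) : Prop :=
  forall x y : H, ip (T x) y = ip x (Ts y).

Definition self_adjoint (T : H -> H) : Prop :=
  forall x y : H, ip (T x) y = ip x (T y).

(* Td is the Moore--Penrose pseudo-inverse of T: the (unique) bounded operator
   satisfying the four Penrose equations *)
Definition mp_pinv (T Td : H -> H) : Prop :=
  [/\ bounded_op Td,
      (forall x, T (Td (T x)) = T x),
      (forall x, Td (T (Td x)) = Td x),
      self_adjoint (fun x => T (Td x)) &
      self_adjoint (fun x => Td (T x))].

End HilbertDefs.

Section MeasureDefs.
Variable R : realType.
Local Notation C := R[i].
Context d (T : measurableType d).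
Variable mu : {measure set T -> \bar R}.

Definition sqmod (z : C) : R := complex.Re z ^+ 2 + complex.Im z ^+ 2.

Definition cmeasurable (h : T -> C) : Prop :=
  measurable_fun setT (fun w => complex.Re (h w)) /\ measurable_fun setT (fun w => complex.Im (h w)).

Definition cintegrable (h : T -> C) : Prop :=
  mu.-integrable setT (fun w => (complex.Re (h w))%:E) /\
  mu.-integrable setT (fun w => (complex.Im (h w))%:E).

Definition cintegral (h : T -> C) : C :=
  Complex (Rintegral mu setT (fun w => complex.Re (h w)))
          (Rintegral mu setT (fun w => complex.Im (h w))).

Definition L2fun (c : T -> C) : Prop :=
  cmeasurable c /\ (\int[mu]_(w in setT) (sqmod (c w))%:E < +oo)%E.

Variable H : lmodType C.
Variable ip : H -> H -> C.

Definition weakly_measurable (F : T -> H) : Prop :=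
  forall f : H, cmeasurable (fun w => ip f (F w)).

(* Parseval continuous K-frame; Ks is the adjoint K^* of K *)
Definition parseval_cont_Kframe (Ks : H -> H) (F : T -> H) : Prop :=
  weakly_measurable F /\
  forall f : H, (\int[mu]_(w in setT) (sqmod (ip f (F w)))%:E)%E
                = ((hnorm ip (Ks f)) ^+ 2)%:E.

(* v = \int c(w) F(w) dmu(w) in the weak sense:
   <v, g> = \int c(w) <F(w), g> dmu(w) for all g (integrand integrable) *)
Definition weak_integral (c : T -> C) (F : T -> H) (v : H) : Prop :=
  forall g : H, cintegrable (fun w => c w * ip (F w) g) /\
                ip v g = cintegral (fun w => c w * ip (F w) g).

End MeasureDefs.

(* Main.v *)
Require Import Defs.
From HB Require Import structures.
From mathcomp Require Import all_boot all_order all_algebra.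
From mathcomp Require Import all_classical all_reals all_analysis.
From mathcomp Require Import complex.
From mathcomp Require Import ring lra.
Set Implicit Arguments. Unset Strict Implicit. Unset Printing Implicit Defensive.
Import Order.TTheory GRing.Theory Num.Theory.
Local Open Scope ring_scope.
Local Open Scope classical_set_scope.
Local Open Scope complex_scope.
Local Open Scope ring_scope.

Section Cplx.
Variable R : realType.
Implicit Types x y : R[i].
Lemma cReM x y : complex.Re (x * y) = complex.Re x * complex.Re y - complex.Im x * complex.Im y.
Proof. by case: x => a b; case: y => c e. Qed.
Lemma cImM x y : complex.Im (x * y) = complex.Re x * complex.Im y + complex.Im x * complex.Re y.
Proof. by case: x => a b; case: y => c e. Qed.
Lemma cReD x y : complex.Re (x + y) = complex.Re x + complex.Re y.
Proof. by case: x => a b; case: y => c e. Qed.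
Lemma cImD x y : complex.Im (x + y) = complex.Im x + complex.Im y.
Proof. by case: x => a b; case: y => c e. Qed.
Lemma cReN x : complex.Re (- x) = - complex.Re x.
Proof. by case: x. Qed.
Lemma cImN x : complex.Im (- x) = - complex.Im x.
Proof. by case: x. Qed.
Lemma cReB x y : complex.Re (x - y) = complex.Re x - complex.Re y.
Proof. by rewrite cReD cReN. Qed.
Lemma cImB x y : complex.Im (x - y) = complex.Im x - complex.Im y.
Proof. by rewrite cImD cImN. Qed.
Lemma cReJ x : complex.Re (conjc x) = complex.Re x.
Proof. by case: x. Qed.
Lemma cImJ x : complex.Im (conjc x) = - complex.Im x.
Proof. by case: x. Qed.
Lemma cRe0 : complex.Re (0 : R[i]) = 0. Proof. by []. Qed.
Lemma cIm0 : complex.Im (0 : R[i]) = 0. Proof. by []. Qed.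
Lemma cRe1 : complex.Re (1 : R[i]) = 1. Proof. by []. Qed.
Lemma cIm1 : complex.Im (1 : R[i]) = 0. Proof. by []. Qed.
Lemma cReC (r : R) : complex.Re (r%:C) = r. Proof. by []. Qed.
Lemma cImC (r : R) : complex.Im (r%:C) = 0. Proof. by []. Qed.
Lemma cReCo (r s : R) : complex.Re (Complex r s) = r. Proof. by []. Qed.
Lemma cImCo (r s : R) : complex.Im (Complex r s) = s. Proof. by []. Qed.
Lemma cext x y : complex.Re x = complex.Re y -> complex.Im x = complex.Im y -> x = y.
Proof. by case: x => a b; case: y => c e /= -> ->. Qed.
End Cplx.

Ltac csimp := rewrite ?(cReM, cImM, cReB, cImB, cReD, cImD, cReN, cImN, cReJ, cImJ,
  cRe0, cIm0, cRe1, cIm1, cReC, cImC, cReCo, cImCo).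

Section Hilb.
Variable R : realType.
Local Notation C := R[i].
Variable H : lmodType C.
Variable ip : H -> H -> C.
Hypothesis hH : hilbert_space ip.
Local Notation N x := (complex.Re (ip x x)).

Lemma ipD1 x y z : ip (x + y) z = ip x z + ip y z.
Proof. by have := ip_linear hH 1 x y z; rewrite scale1r mul1r. Qed.
Lemma ip0l z : ip 0 z = 0.
Proof.
have := ipD1 0 0 z; rewrite addr0 => h.
by apply: (@addrI _ (ip 0 z)); rewrite addr0 -h.
Qed.
Lemma ipZ1 a x z : ip (a *: x) z = a * ip x z.
Proof. by rewrite -[a *: x]addr0 (ip_linear hH) ip0l addr0. Qed.
Lemma ip0r z : ip z 0 = 0.
Proof. by rewrite (ip_conj_sym hH) ip0l conjc0. Qed.
Lemma ipD2 x y z : ip z (x + y) = ip z x + ip z y.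
Proof.
rewrite (ip_conj_sym hH) ipD1 [ip z x](ip_conj_sym hH) [ip z y](ip_conj_sym hH).
apply: cext; csimp; lra.
Qed.
Lemma ipZ2 a x z : ip z (a *: x) = conjc a * ip z x.
Proof.
rewrite (ip_conj_sym hH) ipZ1 [ip z x](ip_conj_sym hH).
apply: cext; csimp; lra.
Qed.
Lemma ipN1 x z : ip (- x) z = - ip x z.
Proof. by rewrite -scaleN1r ipZ1 mulN1r. Qed.
Lemma ipB1 x y z : ip (x - y) z = ip x z - ip y z.
Proof. by rewrite ipD1 ipN1. Qed.
Lemma ipN2 x z : ip z (- x) = - ip z x.
Proof. rewrite -scaleN1r ipZ2; apply: cext; csimp; lra. Qed.
Lemma ipB2 x y z : ip z (x - y) = ip z x - ip z y.
Proof. by rewrite ipD2 ipN2. Qed.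
Lemma ipIm x : complex.Im (ip x x) = 0.
Proof.
have h := ip_conj_sym hH x x.
have : complex.Im (ip x x) = complex.Im (conjc (ip x x)) by rewrite -h.
rewrite cImJ; lra.
Qed.
Lemma ipR x : ip x x = (N x)%:C.
Proof. by apply: cext; csimp; rewrite ?ipIm. Qed.
Lemma N_ge0 x : 0 <= N x. Proof. exact: ip_nonneg. Qed.
Lemma N_eq0 x : N x = 0 -> x = 0.
Proof. move=> h; apply: (ip_definite hH); by rewrite ipR h. Qed.
Lemma ipJ x y : ip y x = conjc (ip x y). Proof. exact: ip_conj_sym. Qed.
Lemma NDe x y : N (x + y) = N x + N y + 2 * complex.Re (ip x y).
Proof.
rewrite ipD1 !ipD2 [ip y x]ipJ; csimp; lra.
Qed.
Lemma NZe a x : N (a *: x) = sqmod a * N x.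
Proof.
rewrite ipZ1 ipZ2 ipR /sqmod; csimp; lra.
Qed.

Lemma NN x : N (- x) = N x.
Proof. by rewrite ipN1 ipN2 opprK. Qed.
Lemma NB x y : N (x - y) = N (y - x).
Proof. by rewrite -NN opprB. Qed.

Lemma CS x y : sqmod (ip x y) <= N x * N y.
Proof.
have [/N_eq0 ->|hy] := eqVneq (N y) 0.
  by rewrite !ip0r /sqmod; csimp; lra.
have ny : 0 < N y by rewrite lt0r hy N_ge0.
set n := N y in ny hy *.
set a := complex.Re (ip x y); set b := complex.Im (ip x y).
set k := n^-1.
have kn : k * n = 1 by rewrite mulVf.
pose t : C := k%:C * ip x y.
have := N_ge0 (x + (- t) *: y).
rewrite NDe NZe ipZ2 /sqmod; csimp; rewrite -/a -/b -/n.
have e1 : ((- (k * a - 0 * b)) ^+ 2 + (- (k * b + 0 * a)) ^+ 2) * n = k * (a^+2 + b^+2) * (k * n) by ring.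
rewrite e1 kn mulr1 => h.
have h2 : 0 <= N x - k * (a ^+ 2 + b ^+ 2) by lra.
have h3 : 0 <= (N x - k * (a ^+ 2 + b ^+ 2)) * n by apply: mulr_ge0 => //; exact: ltW.
have e2 : (N x - k * (a ^+ 2 + b ^+ 2)) * n = N x * n - (a^+2 + b^+2) * (k * n) by ring.
rewrite e2 kn mulr1 in h3; lra.
Qed.

Lemma Re_le_sqmod (z : C) : complex.Re z ^+ 2 <= sqmod z.
Proof. rewrite /sqmod; have := sqr_ge0 (complex.Im z); lra. Qed.

Lemma sqmod_ge0 (z : C) : 0 <= sqmod z.
Proof. rewrite /sqmod; have := sqr_ge0 (complex.Im z); have := sqr_ge0 (complex.Re z); lra. Qed.

Lemma sqmod_eq0 (z : C) : sqmod z = 0 -> z = 0.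
Proof.
rewrite /sqmod => h; have h1 := sqr_ge0 (complex.Im z); have h2 := sqr_ge0 (complex.Re z).
have : complex.Re z ^+ 2 = 0 by lra.
have : complex.Im z ^+ 2 = 0 by lra.
move=> /eqP; rewrite sqrf_eq0 => /eqP hi /eqP; rewrite sqrf_eq0 => /eqP hr.
by apply: cext; [rewrite hr | rewrite hi].
Qed.

Lemma Nadd_le x y t : 0 < t -> N (x + y) <= (1 + t) * N x + (1 + t^-1) * N y.
Proof.
move=> t0; rewrite NDe.
have hc := CS x y; have hr := Re_le_sqmod (ip x y).
set r := complex.Re (ip x y) in hr *.
set A := N x in hc *; set B := N y in hc *.
have A0 : 0 <= A := N_ge0 x. have B0 : 0 <= B := N_ge0 y.
set s := t^-1. have ts : t * s = 1 by rewrite mulfV // gt_eqF.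
have s0 : 0 < s by rewrite invr_gt0.
suff : 2 * r <= t * A + s * B by lra.
have X0 : 0 <= t * A + s * B by apply: addr_ge0; apply: mulr_ge0 => //; apply: ltW.
have sq : (t * A + s * B) ^+ 2 - 4 * (A * B) = (t * A - s * B) ^+ 2.
  have -> : 4 * (A * B) = 4 * (A * B) * (t * s) by rewrite ts mulr1.
  ring.
have := sqr_ge0 (t * A - s * B); rewrite -sq => hq.
have h4 : (2 * r) ^+ 2 <= (t * A + s * B) ^+ 2.
  have -> : (2 * r) ^+ 2 = 4 * r ^+ 2 by ring.
  have : 4 * r ^+ 2 <= 4 * (A * B) by lra.
  lra.
case: (lerP (2 * r) (t * A + s * B)) => // hlt.
have : (t * A + s * B) ^+ 2 < (2 * r) ^+ 2.
  rewrite -subr_gt0 subr_sqr; apply: mulr_gt0; lra.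
lra.
Qed.


Lemma conv_N u l : converges_to ip u l -> forall e : R, 0 < e ->
  exists k, forall n, (k <= n)%N -> N (u n - l) < e.
Proof.
move=> h e e0; have [k hk] := h (Num.sqrt e) (ltac:(by rewrite sqrtr_gt0)).
by exists k => n /hk; rewrite /hnorm ltr_sqrt.
Qed.

Lemma cauchy_N u : (forall e : R, 0 < e -> exists k, forall m n, (k <= m)%N -> (k <= n)%N ->
  N (u m - u n) < e) -> cauchy_seq ip u.
Proof.
move=> h e e0; have [k hk] := h (e ^+ 2) (exprn_gt0 2 e0).
exists k => m n hm hn; have := hk m n hm hn.
by rewrite /hnorm -ltr_sqrt ?exprn_gt0 // sqrtr_sqr gtr0_norm.
Qed.

Definition iv (n : nat) : R := (n.+1%:R)^-1.
Lemma iv_gt0 n : 0 < iv n. Proof. by rewrite /iv invr_gt0 ltr0n. Qed.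
Lemma inv_le k n : (k <= n)%N -> iv n <= iv k.
Proof. by move=> kn; rewrite /iv lef_pV2 ?posrE ?ltr0n // ler_nat. Qed.

Lemma archi_inv (e : R) : 0 < e -> exists k : nat, iv k < e.
Proof.
move=> e0; exists (Num.trunc (e^-1)); rewrite /iv.
have h := truncnS_gt (e^-1).
by rewrite -[X in _ < X]invrK ltf_pV2 ?posrE ?invr_gt0 ?ltr0n.
Qed.


Lemma riesz (phi : H -> C) :
  (forall a x y, phi (a *: x + y) = a * phi x + phi y) ->
  (exists M, forall x, sqmod (phi x) <= M * N x) ->
  exists g, forall x, phi x = ip x g.
Proof.
move=> lin [M hM].
have phiD x y : phi (x + y) = phi x + phi y by have := lin 1 x y; rewrite scale1r mul1r.
have phi0 : phi 0 = 0.
  have := phiD 0 0; rewrite addr0 => h.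
  by apply: (@addrI _ (phi 0)); rewrite addr0 -h.
have phiZ a x : phi (a *: x) = a * phi x by have := lin a x 0; rewrite !addr0 phi0 addr0.
have phiB x y : phi (x - y) = phi x - phi y by rewrite phiD -scaleN1r phiZ mulN1r.
case: (pselect (forall x, phi x = 0)) => [h0|].
  by exists 0 => x; rewrite ip0r h0.
move=> /existsNP [x0 hx0].
pose x1 := (phi x0)^-1 *: x0.
have hx1 : phi x1 = 1 by rewrite phiZ mulVf //; apply/eqP.
pose E := [set r | exists x, phi x = 1 /\ N x = r].
have E0 : E !=set0 by exists (N x1), x1.
have Elb : lbound E 0 by move=> r [x [_ <-]]; exact: N_ge0.
have hinf : has_inf E by split => //; exists 0.
pose d2 := inf E.
have d2le x : phi x = 1 -> d2 <= N x.
  by move=> hx; apply: (ge_inf (proj2 hinf)); exists x.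
have d20 : 0 <= d2 by apply: lb_le_inf.
have hseq : forall n : nat, exists x, phi x = 1 /\ N x < d2 + iv n.
  move=> n; have hp := iv_gt0 n.
  have [r [x [hx <-]] hr] := inf_adherent hp hinf.
  by exists x.
have [u hu] := choice hseq.
have par x y : phi x = 1 -> phi y = 1 -> N (x - y) <= 2 * N x + 2 * N y - 4 * d2.
  move=> hx hy.
  pose m := (2^-1 : R)%:C *: (x + y).
  have hm : phi m = 1.
    rewrite phiZ phiD hx hy; apply: cext; csimp; lra.
  have := d2le m hm; rewrite NZe /sqmod; csimp.
  have -> : ((2^-1 : R) ^+ 2 + 0 ^+ 2) = 4^-1 by field.
  have e1 := NDe x y. have e2 := NDe x (-y).
  rewrite NN ipN2 in e2; move: e2; csimp => e2.
  lra.
have cu : cauchy_seq ip u.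
  apply: cauchy_N => e e0.
  have [k hk] := (@archi_inv (e / 4) (ltac:(by apply: divr_gt0))).
  exists k => m n hm hn.
  have := par _ _ (proj1 (hu m)) (proj1 (hu n)).
  have := proj2 (hu m); have := proj2 (hu n); have := inv_le hm; have := inv_le hn.
  move=> *; lra.
have [l hl] := ip_complete hH cu.
have hlN := conv_N hl.
have phil : phi l = 1.
  suff : sqmod (phi l - 1) = 0 by move/sqmod_eq0/subr0_eq.
  apply/eqP; rewrite eq_le sqmod_ge0 andbT; apply/negP => /negP; rewrite -ltNge => dpos.
  set de := sqmod (phi l - 1) in dpos.
  have Mp : 0 < `|M| + 1 by have := normr_ge0 M; lra.
  have [k hk] := hlN (de / (`|M| + 1)) (divr_gt0 dpos Mp).
  have := hk k (leqnn k); rewrite ltr_pdivlMr // => h1.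
  have e : de = sqmod (phi (u k - l)).
    by rewrite phiB (proj1 (hu k)) /de /sqmod; csimp; ring.
  have h2 := hM (u k - l).
  have h0 := N_ge0 (u k - l).
  have h3 : M * N (u k - l) <= `|M| * N (u k - l) by apply: ler_wpM2r => //; exact: ler_norm.
  suff : de < de by rewrite ltxx.
  lra.
have Nl_le : N l <= d2.
  rewrite leNgt; apply/negP => hlt.
  set de := N l - d2.
  have de0 : 0 < de by rewrite /de subr_gt0.
  have q0 : 0 < 4 * d2 + de by lra.
  set t := de / (4 * d2 + de).
  have t0 : 0 < t by apply: divr_gt0.
  have ht : t * (4 * d2 + de) = de by rewrite /t mulfVK // gt_eqF.
  have t10 : 0 < t + 1 by lra.
  set eta := de * t / (4 * (t + 1)).
  have eta0 : 0 < eta by apply: divr_gt0; [apply: mulr_gt0 | lra].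
  have heta : (1 + t^-1) * eta = de / 4.
    rewrite /eta; field; apply/andP; split; rewrite gt_eqF //.
  have [k1 hk1] := hlN eta eta0.
  have [k2 hk2] := (@archi_inv (de / 4) (ltac:(by apply: divr_gt0))).
  pose n := maxn k1 k2.
  have h1 := hk1 n (leq_maxl _ _).
  have h2 := inv_le (leq_maxr k1 k2).
  have h3 := proj2 (hu n).
  have h4 := Nadd_le (u n) (l - u n) t0.
  rewrite [u n + _]addrC subrK NB in h4.
  have it0 : 0 < 1 + t^-1 by have := invr_gt0 t; rewrite t0; lra.
  have h5 : (1 + t^-1) * N (u n - l) < (1 + t^-1) * eta by rewrite ltr_pM2l.
  have h6 : (1 + t) * N (u n) < (1 + t) * (d2 + de / 4).
    rewrite ltr_pM2l; last lra.
    lra.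
  suff : N l < N l by rewrite ltxx.
  have ede : de = N l - d2 by [].
  clearbody eta t de.
  lra.
have orth y : phi y = 0 -> ip y l = 0.
  move=> hy. set w := ip l y.
  have key s : 0 <= sqmod s * N y + 2 * complex.Re (conjc s * w).
    have := d2le (l + s *: y); rewrite phiD phiZ hy mulr0 addr0 phil => /(_ erefl).
    rewrite NDe NZe ipZ2 -/w; lra.
  set tau := (N y + 1)^-1.
  have Ny0 := N_ge0 y.
  have tau0 : 0 < tau by rewrite invr_gt0; lra.
  have htau : tau * (N y + 1) = 1 by rewrite mulVf //; apply/eqP; lra.
  set S := sqmod w.
  have S0 : 0 <= S := sqmod_ge0 w.
  have := key (- (tau%:C * w)).
  have -> : sqmod (- (tau%:C * w)) * N y + 2 * complex.Re (conjc (- (tau%:C * w)) * w)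
          = tau * S * (tau * N y) - 2 * (tau * S).
    by rewrite /S /sqmod; csimp; ring.
  have P0 : 0 <= tau * S by apply: mulr_ge0 => //; exact: ltW.
  have hle : tau * N y <= 1 by lra.
  have : tau * S * (tau * N y) <= tau * S by rewrite -[X in _ <= X]mulr1; apply: ler_wpM2l.
  move=> h1 h2.
  have PS : tau * S = 0 by lra.
  move/eqP: PS; rewrite mulf_eq0 gt_eqF //= => /eqP /sqmod_eq0 w0.
  by rewrite ipJ -/w w0 conjc0.
have Nl0 : 0 < N l.
  rewrite lt0r N_ge0 andbT; apply/eqP => /N_eq0 l0.
  by move: phil; rewrite l0 phi0 => /eqP; rewrite eq_sym oner_eq0.
exists ((N l)^-1%:C *: l) => x.
have hy : phi (x - phi x *: l) = 0 by rewrite phiB phiZ phil mulr1 subrr.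
have := orth _ hy; rewrite ipB1 ipZ1 ipR => /subr0_eq h.
rewrite ipZ2 h.
have nz : N l != 0 by rewrite gt_eqF.
apply: cext; csimp.
  by field.
by field.
Qed.

End Hilb.

Theorem theorem3p9 (R : realType) (H : lmodType R[i]) (ip : H -> H -> R[i])
  (hH : hilbert_space ip) (hsep : separable ip)
  (d : measure_display) (T : measurableType d) (mu : {measure set T -> \bar R})
  (K Ks Kd : H -> H)
  (hK : bounded_op ip K) (hKcl : closed_range ip K)
  (hKs : adjoint_of ip K Ks) (hKd : mp_pinv ip K Kd)
  (F : T -> H) (hF : parseval_cont_Kframe mu ip Ks F)
  (f : H) (c : T -> R[i]) (hc : L2fun mu c)
  (hcf : weak_integral mu ip c F (K f)) :
  (\int[mu]_(w in setT) (sqmod (c w))%:E =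
   \int[mu]_(w in setT) (sqmod (c w - ip f (Kd (F w))))%:E +
   \int[mu]_(w in setT) (sqmod (ip f (Kd (F w))))%:E)%E.
Proof.
case: hKd => [[Kdlin [M hM]] KKdK KdKKd saKKd saKdK].
have NKd x : complex.Re (ip (Kd x) (Kd x)) <= M ^+ 2 * complex.Re (ip x x).
  have h := hM x; rewrite /hnorm in h.
  have h0 := sqrtr_ge0 (complex.Re (ip (Kd x) (Kd x))).
  have h1 := sqrtr_ge0 (complex.Re (ip x x)).
  rewrite -(sqr_sqrtr (N_ge0 hH (Kd x))) -(sqr_sqrtr (N_ge0 hH x)).
  nra.
have [g hg] : exists g, forall x, ip (Kd x) f = ip x g.
  apply: (riesz hH (phi := fun x => ip (Kd x) f)).
    by move=> a x y /=; rewrite Kdlin ipD1 // ipZ1.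
  exists (M ^+ 2 * complex.Re (ip f f)) => x.
  have h1 := CS hH (Kd x) f.
  have h2 := NKd x.
  have h3 := N_ge0 hH f.
  apply: (le_trans h1).
  rewrite mulrAC; apply: ler_wpM2r => //.
have ea w : ip f (Kd (F w)) = ip g (F w).
  by rewrite (ipJ hH) hg -(ipJ hH).
have eKs : Ks g = Kd (K f).
  apply: subr0_eq; apply: (N_eq0 hH).
  rewrite ipB2 // -hKs -hg -saKdK subrr.
  by [].
have hA : complex.Re (ip (Ks g) (Ks g)) = complex.Re (ip (K f) g).
  by rewrite eKs -hg -saKdK KdKKd.
have -> : (fun w => (sqmod (c w - ip f (Kd (F w))))%:E) =
          (fun w => ((sqmod (c w) + sqmod (ip g (F w))) - 2 * complex.Re (c w * ip (F w) g))%:E).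
  apply: funext => w; rewrite ea [ip (F w) g](ipJ hH) /sqmod; congr EFin; csimp; ring.
have -> : (fun w => (sqmod (ip f (Kd (F w))))%:E) = (fun w => (sqmod (ip g (F w)))%:E).
  by apply: funext => w; rewrite ea.
have ifc : mu.-integrable setT (EFin \o (fun w => sqmod (c w))).
  apply/integrableP; split.
    apply/measurable_realfun.measurable_EFinP; apply: measurable_realfun.measurable_funD;
      apply: measurable_realfun.measurable_funX; [exact: hc.1.1 | exact: hc.1.2].
  under eq_integral => w _ do rewrite /= ger0_norm ?sqmod_ge0 //.
  exact: hc.2.
have ifa : mu.-integrable setT (EFin \o (fun w => sqmod (ip g (F w)))).
  apply/integrableP; split.
    apply/measurable_realfun.measurable_EFinP; apply: measurable_realfun.measurable_funD;
      apply: measurable_realfun.measurable_funX; [exact: (hF.1 g).1 | exact: (hF.1 g).2].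
  under eq_integral => w _ do rewrite /= ger0_norm ?sqmod_ge0 //.
  by rewrite hF.2 ltey.
have ifr : mu.-integrable setT (EFin \o (fun w => complex.Re (c w * ip (F w) g))) := (hcf g).1.1.
have ifca : mu.-integrable setT (EFin \o (fun w => sqmod (c w) + sqmod (ip g (F w)))).
  have -> : EFin \o (fun w => sqmod (c w) + sqmod (ip g (F w))) =
            ((EFin \o (fun w => sqmod (c w))) \+ (EFin \o (fun w => sqmod (ip g (F w)))))%E.
    by apply: funext => w; rewrite /= EFinD.
  exact: integrableD.
have i2fr : mu.-integrable setT (EFin \o (fun w => 2 * complex.Re (c w * ip (F w) g))).
  have -> : EFin \o (fun w => 2 * complex.Re (c w * ip (F w) g)) =
            (fun w => (2%:E * (EFin \o (fun v => complex.Re (c v * ip (F v) g)%R)) w)%E).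
    by apply: funext => w; rewrite /= EFinM.
  exact: integrableZl.
rewrite integralB_EFin //.
have -> : (\int[mu]_w (sqmod (c w) + sqmod (ip g (F w)))%R%:E =
          \int[mu]_w (sqmod (c w))%:E + \int[mu]_w (sqmod (ip g (F w)))%:E)%E.
  by rewrite -integralD_EFin.
have -> : (\int[mu]_w (2 * complex.Re (c w * ip (F w) g))%R%:E =
          2%:E * \int[mu]_w (complex.Re (c w * ip (F w) g)%R)%:E)%E.
  transitivity (\int[mu]_w (2%:E * (complex.Re (c w * ip (F w) g)%R)%:E))%E.
    by apply: eq_integral => w _; rewrite EFinM.
  exact: (integralZl measurableT ifr).
have hfa : (\int[mu]_w (sqmod (ip g (F w)))%:E)%E = (complex.Re (ip (Ks g) (Ks g)))%:E.
  by rewrite hF.2 /hnorm sqr_sqrtr // N_ge0.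
have hfr : (\int[mu]_w (complex.Re (c w * ip (F w) g)%R)%:E)%E = (complex.Re (ip (K f) g))%:E.
  rewrite (hcf g).2 /cintegral /= /Rintegral fineK //.
  exact: (integrable_fin_num measurableT ifr).
rewrite hfa hfr -hA -(fineK (integrable_fin_num measurableT ifc)).
set r := fine _; set A := complex.Re _.
have -> : ((2 : \bar R) * A%:E = (2 * A)%:E)%E by [].
rewrite -EFinN -!EFinD; congr EFin; ring.
Qed.
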